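(* Let $\varphi(x)=a_nx^n+\cdots+a_1x+a_0\in\mathbb{C}[x]$ with $a_n\neq0$ have $n$ distinct roots $x_1,\dots,x_n$, and let $h(x)\in R$. Let $h_*(x)=c_{n-1}x^{n-1}+\cdots+c_1x+c_0$ be the unique polynomial of degree less than $n$ in the coset $\overline{h(x)}\in R/(\varphi(x))$, and let $r(x)=b_{n-1}x^{n-1}+\cdots+b_1x+b_0$ be the unique polynomial of degree less than $n$ in the coset $\overline{\varphi'(x)h(x)}\in R/(\varphi(x))$. Define numbers $b_{j,k}$ ($j=-1,0,\dots,n-1$, $k=0,\dots,n-1$) by $b_{-1,k}=0$, $$b_{n-i,0}=(n-(i-1))\,a_{n-(i-1)},\qquad i=1,\dots,n,$$ $$b_{n-i,k}=-\frac{a_{n-i}}{a_n}\,b_{n-1,k-1}+b_{n-(i+1),k-1},\qquad i=1,\dots,n,\ k=1,\dots,n-1.$$ Then $$b_{n-i}=c_{n-1}b_{n-i,n-1}+\cdots+c_1b_{n-i,1}+c_0b_{n-i,0},\qquad i=1,\dots,n.$$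
   Context: $R\subset\mathbb{C}(x)$ denotes the subring of rational functions $p(x)/q(x)$ with $p,q\in\mathbb{C}[x]$ and $q(x_i)\neq0$ for every root $x_i$ of $\varphi$. $(\varphi(x))$ is the ideal of $R$ generated by $\varphi$, and cosets in $R/(\varphi(x))$ are denoted by an overbar. Every coset of $R/(\varphi(x))$ contains a unique polynomial of degree less than $n$, and members of the same coset take the same values at the roots of $\varphi$. *)

(* Defs.v *)
From mathcomp Require Import all_boot all_order all_algebra.
Set Implicit Arguments. Unset Strict Implicit. Unset Printing Implicit Defensive.
Import GRing.Theory.
Local Open Scope ring_scope.

(* A rational function p/q lies in R iff q does not vanish at any root of phi. *)
Definition nonvan {F : fieldType} (phi q : {poly F}) : Prop :=
  forall x, root phi x -> q.[x] != 0.

(* For h = p/q in R (q nonvanishing at the roots of phi) and a polynomial s,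
   [congR phi p q s] says that s lies in the coset of h in R/(phi), i.e.
   p/q - s = phi * (u/v) for some u/v in R, written without division:
   p * v = q * (s * v + phi * u). *)
Definition congR {F : fieldType} (phi p q s : {poly F}) : Prop :=
  exists u v : {poly F}, nonvan phi v /\ p * v = q * (s * v + phi * u).

(* The numbers b_{j,k} for j = 0..n-1 (b_{-1,k} = 0 is handled by the
   [if] below); here a_j = phi`_j.
   b_{j,0}   = (j+1) a_{j+1}                      (i.e. j = n - i)
   b_{j,k+1} = - (a_j / a_n) b_{n-1,k} + b_{j-1,k}  with b_{-1,k} = 0. *)
Fixpoint bcoef {F : fieldType} (phi : {poly F}) (n : nat) (k j : nat) : F :=
  match k with
  | 0 => (j.+1)%:R * phi`_j.+1
  | k'.+1 => - (phi`_j / phi`_n) * bcoef phi n k' n.-1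
             + (if j is j'.+1 then bcoef phi n k' j' else 0)
  end.

(* Main.v *)
Require Import Defs.
From mathcomp Require Import all_boot all_order all_algebra.
From mathcomp Require Import ring.
Import GRing.Theory.
Local Open Scope ring_scope.

Lemma modX_step {F : fieldType} {n : nat} {phi w : {poly F}} :
  size phi = n.+1 -> (0 < n)%N -> (size w <= n)%N ->
  ('X * w) %% phi = 'X * w - (w`_n.-1 / phi`_n) *: phi.
Proof.
move=> sphi n0 sw.
have lc : phi`_n != 0.
  have : lead_coef phi != 0 by rewrite lead_coef_eq0 -size_poly_eq0 sphi.
  by rewrite lead_coefE sphi.
rewrite -{1}(subrK ((w`_n.-1 / phi`_n) *: phi) ('X * w)) addrC.
rewrite -mul_polyC modp_addl_mul_small // mul_polyC //.
rewrite sphi ltnS; apply/leq_sizeP => j hj.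
rewrite coefB coefZ coefXM.
case: (ltngtP n j) hj => // [lt_nj | <-] _.
  have -> : (j == 0%N) = false by case: j lt_nj.
  have -> : phi`_j = 0 by apply/(leq_sizeP _ n.+1) => //; rewrite sphi.
  rewrite mulr0 subr0; apply/(leq_sizeP _ n) => //; case: j lt_nj => //.
have -> : (n == 0%N) = false by rewrite eqn0Ngt n0.
by rewrite mulfVK // subrr.
Qed.

Theorem proposition1 (F : fieldType) (n : nat) (phi : {poly F}) (xs : seq F)
    (p q hs r : {poly F}) :
  size phi = n.+1 ->
  uniq xs -> size xs = n -> all (root phi) xs ->
  nonvan phi q ->
  (size hs <= n)%N -> congR phi p q hs ->
  (size r <= n)%N -> congR phi (phi^`() * p) q r ->
  forall i : nat, (1 <= i <= n)%N ->
    r`_(n - i) = \sum_(k < n) hs`_k * bcoef phi n k (n - i).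
Proof.
move=> sphi uxs sxs rxs nq shs [u [v [nv ev]]] sr [u' [v' [nv' ev']]] i /andP[i1 i2].
have n0 : (0 < n)%N by apply: leq_trans i2.
have phi0 : phi != 0 by rewrite -size_poly_eq0 sphi.
have rE : r = (phi^`() * hs) %% phi.
  set d := r - phi^`() * hs.
  have rootd : all (root (d %% phi)) xs.
    apply/allP => x xin.
    have rx : root phi x := allP rxs x xin.
    have px0 : phi.[x] = 0 by apply/eqP.
    have e1 := congr1 (fun t => t.[x]) ev.
    have e2 := congr1 (fun t => t.[x]) ev'.
    rewrite /= !hornerE px0 mul0r addr0 in e1.
    rewrite /= !hornerE px0 mul0r addr0 in e2.
    have vx := nv x rx. have vx' := nv' x rx. have qx := nq x rx.
    have e1' : p.[x] = q.[x] * hs.[x].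
      by apply: (mulIf vx); rewrite e1 mulrA.
    have e2' : phi^`().[x] * p.[x] = q.[x] * r.[x].
      by apply: (mulIf vx'); rewrite e2 mulrA.
    have : r.[x] = phi^`().[x] * hs.[x].
      apply: (mulfI qx); rewrite -e2' e1'; rewrite mulrCA //.
    move=> erx.
    have -> : d %% phi = d - d %/ phi * phi.
      by rewrite {2}(divp_eq d phi) addrAC subrr add0r.
    rewrite /root hornerD hornerN hornerM px0 mulr0 subr0.
    by rewrite /d hornerD hornerN hornerM erx subrr.
  have dm0 : d %% phi = 0.
    apply/eqP; apply: contraT => nz.
    have := max_poly_roots nz rootd uxs.
    rewrite sxs; have := ltn_modp d phi; rewrite phi0 sphi ltnS => h1 h2.
    by have := leq_ltn_trans h1 h2; rewrite ltnn.
  have : r %% phi = (phi^`() * hs) %% phi.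
    apply/eqP; rewrite -subr_eq0 -modpN -modpD; exact/eqP.
  by rewrite modp_small // sphi ltnS.
pose w k := ('X^k * phi^`()) %% phi.
have sw : forall k, (size (w k) <= n)%N.
  by move=> k; rewrite -ltnS -sphi ltn_modp.
have wE : forall k j, (j < n)%N -> (w k)`_j = bcoef phi n k j.
  elim=> [|k IH] j jn.
    rewrite /w expr0 mul1r modp_small; last first.
      by apply: leq_trans (lt_size_deriv phi0) _; rewrite sphi.
    by rewrite coef_deriv /= mulr_natl.
  have -> : w k.+1 = ('X * w k) %% phi by rewrite /w modp_mul exprS mulrA.
  rewrite (modX_step sphi n0 (sw k)) coefB coefZ coefXM /=.
  rewrite -(IH n.-1); last by rewrite prednK.
  case: j jn => [|j] jn /=.
    by ring.
  rewrite (IH j) ?(ltnW jn) //; ring.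
have hsE : hs = \sum_(k < n) hs`_k *: 'X^k.
  rewrite -poly_def; apply/polyP => j; rewrite coef_poly.
  case: ltnP => // jn; exact: (leq_sizeP _ _ shs).
have rE2 : r = \sum_(k < n) hs`_k *: w k.
  rewrite rE {1}hsE mulr_sumr.
  rewrite (big_morph (fun t => t %% phi) (modpD phi) (mod0p phi)).
  by apply: eq_bigr => k _; rewrite -scalerAr modpZl /w mulrC.
rewrite rE2 coef_sum; apply: eq_bigr => k _.
by rewrite coefZ wE // ltn_subrL n0 i1.
Qed.
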